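(* Let $q\ge 2$ and $n\ge 1$ be integers and let $\boldsymbol{x}\neq\boldsymbol{y}\in\Sigma_q^n$. Then $d_H(\mathcal{R}(\boldsymbol{x}),\mathcal{R}(\boldsymbol{y}))=2$ if and only if there exist sequences $\boldsymbol{u},\boldsymbol{v}\in\Sigma_q^{\ge 0}$, two distinct symbols $a,b\in\Sigma_q$ and an integer $t\ge 1$ such that $$\boldsymbol{x}=(\boldsymbol{u},\boldsymbol{\alpha}_t(ab),\boldsymbol{v}),\qquad \boldsymbol{y}=(\boldsymbol{u},\boldsymbol{\alpha}_t(ba),\boldsymbol{v}).$$
   Context: $\Sigma_q=\{0,1,\dots,q-1\}$; $\Sigma_q^{\ge 0}$ is the set of all finite sequences over $\Sigma_q$, including the empty one; $(\cdot,\cdot)$ denotes concatenation. For $\boldsymbol{x}\in\Sigma_q^n$, $x[i]$ is its $i$-th entry, with the convention $x[i]=0$ for $i\notin[1,n]$; $\boldsymbol{x}[i,j]=(x[i],\dots,x[j])$. The $2$-read vector of $\boldsymbol{x}$ is $\mathcal{R}(\boldsymbol{x})=(c(\boldsymbol{x}[0,1]),c(\boldsymbol{x}[1,2]),\dots,c(\boldsymbol{x}[n,n+1]))$, a vector of length $n+1$ whose $i$-th entry is the multiset $\{\{x[i-1],x[i]\}\}$. $d_H$ denotes Hamming distance (number of positions where entries differ). For distinct $a,b$ and $t\ge 0$, $\boldsymbol{\alpha}_t(ab)$ is the alternating sequence $abab\cdots$ of length $t$, i.e. $(ab)^{t/2}$ if $t$ is even and $(ab)^{(t-1)/2}a$ if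 $t$ is odd. *)

(* Defs.v *)
From mathcomp Require Import all_boot.
Set Implicit Arguments. Unset Strict Implicit. Unset Printing Implicit Defensive.

(* Sigma_q = 'I_q; a sequence over Sigma_q is a seq 'I_q. *)

(* The multiset {{a, b}} of two naturals, represented canonically as the
   sorted list of its elements (two multisets are equal iff these agree). *)
Definition mset2 (a b : nat) : seq nat := sort leq [:: a; b].

Definition padded q (x : seq 'I_q) : seq nat := 0 :: map val x ++ [:: 0].

(* The 2-read vector R(x) : its i-th entry (i = 1..n+1) is {{x[i-1], x[i]}}. *)
Definition read2 q (x : seq 'I_q) : seq (seq nat) :=
  let p := padded x in
  mkseq (fun i => mset2 (nth 0 p i) (nth 0 p i.+1)) (size x).+1.

Definition dH (T : eqType) (s t : seq T) : nat :=
  count (fun pr : T * T => pr.1 != pr.2) (zip s t).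

Definition alpha (T : Type) (t : nat) (a b : T) : seq T :=
  mkseq (fun i => if odd i then b else a) t.

(* Main.v *)
Require Import Defs.
From mathcomp Require Import all_boot zify.

Lemma mset2E a b : mset2 a b = if a <= b then [:: a; b] else [:: b; a].
Proof. by rewrite /mset2 /sort /=; case: ifP. Qed.

Lemma mset2_eq a b c d :
  mset2 a b = mset2 c d <-> (a = c /\ b = d) \/ (a = d /\ b = c).
Proof.
rewrite !mset2E; split.
- by case: (leqP a b); case: (leqP c d) => H1 H2 [] E1 E2; subst; lia.
- case=> [[-> ->]|[-> ->]] //; case: (leqP c d); case: (leqP d c) => // H1 H2.
  all: by have -> : c = d by lia.
Qed.

Lemma mset2_neq a b c : a != b -> mset2 a c != mset2 b c.
Proof.
move=> ab; apply/eqP => /mset2_eq; case=> [[E _]|[E1 E2]]; move: ab;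
  rewrite ?E ?E1 ?E2 eqxx //.
Qed.

Lemma mset2_neqr a b c : a != b -> mset2 c a != mset2 c b.
Proof.
move=> ab; apply/eqP => /mset2_eq; case=> [[_ E]|[E1 E2]]; move: ab;
  rewrite ?E -?E1 ?E2 eqxx //.
Qed.

Section S.
Variable q : nat.

Fixpoint R (p : nat) (x : seq 'I_q) : seq (seq nat) :=
  match x with
  | [::] => [:: mset2 p 0]
  | c :: x' => mset2 p c :: R (val c) x'
  end.

Lemma mkseqSl (T : Type) (f : nat -> T) n :
  mkseq f n.+1 = f 0 :: mkseq (fun i => f i.+1) n.
Proof.
rewrite /mkseq /=; congr (_ :: _); rewrite -[1]/(1 + 0) iotaDl -map_comp.
by apply: eq_map => i.
Qed.

Lemma readR p (x : seq 'I_q) :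
  mkseq (fun i => mset2 (nth 0 (p :: map val x ++ [:: 0]) i)
                        (nth 0 (p :: map val x ++ [:: 0]) i.+1)) (size x).+1
  = R p x.
Proof.
elim: x p => [|c x IH] p; first by [].
by rewrite /= mkseqSl -IH.
Qed.

Lemma dH_cons (T : eqType) (a b : T) s t :
  dH (a :: s) (b :: t) = (a != b) + dH s t.
Proof. by []. Qed.

Lemma dH_refl (T : eqType) (s : seq T) : dH s s = 0.
Proof. by elim: s => //= a s; rewrite /dH /= eqxx. Qed.

Lemma alphaS (T : Type) t (a b : T) : alpha t.+1 a b = a :: alpha t b a.
Proof.
rewrite /alpha mkseqSl; congr (_ :: _); apply: eq_mkseq => i /=.
by case: (odd i).
Qed.

Lemma lemC (x y : seq 'I_q) c d :
  size x = size y -> dH (R c x) (R d y) = 0 -> c = d /\ x = y.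
Proof.
elim: x y c d => [|c' x IH] [|d' y] c d //=.
- rewrite /dH /=; case: eqP => // /mset2_eq H _ _; split => //; lia.
- case=> Hs; rewrite dH_cons; case: eqP => //= E H.
  have [/val_inj E1 E2] := IH _ _ _ Hs H; subst.
  split => //; move/mset2_eq: E; lia.
Qed.

Lemma lemB (x y : seq 'I_q) (a b : 'I_q) :
  a != b -> size x = size y ->
  (dH (R (val a) x) (R (val b) y) = 1 <->
   exists t v, x = alpha t b a ++ v /\ y = alpha t a b ++ v).
Proof.
elim: x y a b => [|c x IH] [|d y] a b ab //=.
- move=> _; rewrite /dH /= mset2_neq //; split => // _.
  by exists 0, [::].
- case=> Hs; rewrite dH_cons; case: eqP => /= E.
  + have [[E1 E2]|[E1 E2]] := (mset2_eq _ _ _ _).1 E.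
      by move: ab; rewrite (val_inj E1) eqxx.
    have Ec : c = b by apply: val_inj.
    have Ed : d = a by apply: val_inj.
    subst; rewrite add0n IH //; last by rewrite eq_sym.
    split.
    * by case=> t [v [-> ->]]; exists t.+1, v; rewrite !alphaS.
    * case=> [[|t]] [v] []; rewrite ?alphaS /=.
      - by move=> <- [] Eab _; rewrite Eab eqxx in ab.
      - by case=> Ex; case=> Ey; exists t, v.
  + split.
    * move=> H; have H0 : dH (R c x) (R d y) = 0 by move: H; rewrite add1n => -[].
      have [E1 E2] := @lemC x y _ _ Hs H0.
      subst; exists 0, (d :: y); split => //; congr (_ :: _); exact: val_inj.
    * case=> [[|t]] [v] []; rewrite ?alphaS /=.
      - by move=> <- [] -> ->; rewrite dH_refl.
      - case=> Ec _ [] Ed _; subst; exfalso; apply: E; apply/mset2_eq; right; done.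
Qed.

Lemma lemB0 (v : seq 'I_q) (a b : 'I_q) :
  a != b -> dH (R (val a) v) (R (val b) v) = 1.
Proof.
move=> ab; have H : val a != val b by [].
case: v => [|e v] /=; first by rewrite /dH /= mset2_neq.
by rewrite dH_cons mset2_neq // dH_refl.
Qed.

Lemma lemG (x y : seq 'I_q) p :
  size x = size y -> x != y ->
  (dH (R p x) (R p y) = 2 <->
   exists (u v : seq 'I_q) (a b : 'I_q) (t : nat),
     [/\ a != b, 1 <= t,
         x = u ++ alpha t a b ++ v &
         y = u ++ alpha t b a ++ v]).
Proof.
elim: x y p => [|c x IH] [|d y] p //=.
case=> Hs xy; rewrite dH_cons.
have [Ecd|Ncd] := eqVneq c d.
- subst; rewrite eqxx add0n.
  have xy' : x != y by apply: contraNneq xy => ->.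
  rewrite IH //; split.
  + case=> u [v [a [b [t [ab t1 Ex Ey]]]]]; exists (d :: u), v, a, b, t.
    by rewrite Ex Ey.
  + case=> [[|e u]] [v [a [b [[|t] [ab t1 Ex Ey]]]]] //.
    * move: Ex Ey; rewrite !alphaS /=; case=> -> _; case=> E _.
      by move: ab; rewrite E eqxx.
    * move: Ex Ey => /=; case=> _ Ex; case=> _ Ey; exists u, v, a, b, t.+1.
      by rewrite Ex Ey.
- have Hn : val d != val c by rewrite eq_sym.
  have Hn' : val c != val d by [].
  rewrite mset2_neqr //= add1n.
  split.
  + move=> [] /lemB H; have [t [v [Ex Ey]]] := H Ncd Hs.
    exists [::], v, c, d, t.+1; split => //; by rewrite alphaS ?Ex ?Ey.
  + case=> [[|e u]] [v [a [b [[|t] [ab t1 Ex Ey]]]]] //.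
    * move: Ex Ey; rewrite !alphaS /=; case=> Ec Ex; case=> Ed Ey; subst.
      congr S; apply/(lemB _ _ _ _ ab Hs); by exists t, v.
    * by move: Ex Ey => /= [Ec _] [Ed _]; rewrite Ec Ed eqxx in Ncd.
Qed.

Theorem theorem1_aux (n : nat) (x y : seq 'I_q) :
  size x = n -> size y = n -> x != y ->
  (dH (read2 x) (read2 y) = 2 <->
   exists (u v : seq 'I_q) (a b : 'I_q) (t : nat),
     [/\ a != b, 1 <= t,
         x = u ++ alpha t a b ++ v &
         y = u ++ alpha t b a ++ v]).
Proof.
move=> Hx Hy xy; rewrite /read2 /padded !readR; apply: lemG => //.
by rewrite Hx Hy.
Qed.
End S.

Theorem theorem1 (q n : nat) (x y : seq 'I_q) :
  2 <= q -> 1 <= n -> size x = n -> size y = n -> x != y ->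
  (dH (read2 x) (read2 y) = 2 <->
   exists (u v : seq 'I_q) (a b : 'I_q) (t : nat),
     [/\ a != b, 1 <= t,
         x = u ++ alpha t a b ++ v &
         y = u ++ alpha t b a ++ v]).
Proof. by move=> _ _; apply: theorem1_aux. Qed.
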